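(* Let $s,t\in\mathbb{R}$ with $s\ne0$, $t\ne0$, $s^2+4t>0$, and $q=\varphi'_{s,t}/\varphi_{s,t}$. (1) If $\lvert q\rvert<1$, then on the disk of convergence of its series, $\mathrm{Exp}_{s,t}(z)=\prod_{k=0}^\infty\frac{\varphi_{s,t}^{k+1}}{\varphi_{s,t}^{k+1}-(\varphi_{s,t}-\varphi'_{s,t})\varphi_{s,t}'^{\,k}z}$, and this product gives the meromorphic continuation of $\mathrm{Exp}_{s,t}$ to $\mathbb{C}$. (2) If $\lvert q\rvert>1$, then $\mathrm{Exp}_{s,t}(z)=\prod_{k=0}^\infty\Big(1-(\varphi_{s,t}-\varphi'_{s,t})\frac{\varphi_{s,t}^{k}}{\varphi_{s,t}'^{\,k+1}}z\Big)$.
   Context: $\varphi_{s,t}=\frac{s+\sqrt{s^2+4t}}{2}$, $\varphi'_{s,t}=\frac{s-\sqrt{s^2+4t}}{2}$. Generalized Fibonacci polynomials: $\{0\}_{s,t}=0$, $\{1\}_{s,t}=1$, $\{n+2\}_{s,t}=s\{n+1\}_{s,t}+t\{n\}_{s,t}$; Fibotorial $\{n\}_{s,t}!=\prod_{k=1}^n\{k\}_{s,t}$, $\{0\}_{s,t}!=1$. $\mathrm{Exp}_{s,t}(z)=\sum_{n=0}^\infty\varphi_{s,t}^{\binom n2}\frac{z^n}{\{n\}_{s,t}!}$. *)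

(* Defs.v *)
From Stdlib Require Import Reals.
From Coquelicot Require Import Coquelicot.
Open Scope R_scope.

Definition phi (s t : R) : R := (s + sqrt (s ^ 2 + 4 * t)) / 2.
Definition phi' (s t : R) : R := (s - sqrt (s ^ 2 + 4 * t)) / 2.

Fixpoint fibst (s t : R) (n : nat) : R :=
  match n with
  | O => 0
  | S O => 1
  | S ((S m) as p) => s * fibst s t p + t * fibst s t m
  end.

Fixpoint fibotorial (s t : R) (n : nat) : R :=
  match n with
  | O => 1
  | S m => fibotorial s t m * fibst s t (S m)
  end.

(* real coefficient of z^n in Exp_{s,t}: phi^{binom n 2} / {n}! *)
Definition Exp_coef (s t : R) (n : nat) : R :=
  phi s t ^ (n * (n - 1) / 2) / fibotorial s t n.

Fixpoint Cpow (z : C) (n : nat) : C :=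
  match n with
  | O => RtoC 1
  | S m => Cmult (Cpow z m) z
  end.

Definition Exp_term (s t : R) (z : C) (n : nat) : C :=
  Cmult (RtoC (Exp_coef s t n)) (Cpow z n).

Fixpoint Cprod (f : nat -> C) (N : nat) : C :=
  match N with
  | O => RtoC 1
  | S m => Cmult (Cprod f m) (f m)
  end.

Definition is_inf_prod (f : nat -> C) (L : C) : Prop :=
  filterlim (fun N => Cprod f N) eventually (locally L).

Definition in_disk_of_conv (a : nat -> R) (z : C) : Prop :=
  exists r : R, Cmod z < r /\ exists M : R, forall n, Rabs (a n) * r ^ n <= M.

Definition C_holo_at (f : C -> C) (z : C) : Prop :=
  @ex_derive C_AbsRing C_NormedModule f z.

(* P is meromorphic on C with (discrete) exceptional set Z: holomorphic off Z,
   and every point of Z is isolated in Z and is a pole or removable singularity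
   (i.e. (z - w)^m P z extends holomorphically across w for some m). *)
Definition meromorphic_on_C (P : C -> C) (Z : C -> Prop) : Prop :=
  (forall z, ~ Z z -> C_holo_at P z) /\
  (forall w, Z w ->
     exists r : R, 0 < r /\
       (forall z, 0 < Cmod (Cminus z w) < r -> ~ Z z) /\
       exists (m : nat) (g : C -> C),
         (forall z, Cmod (Cminus z w) < r -> C_holo_at g z) /\
         (forall z, 0 < Cmod (Cminus z w) < r ->
            g z = Cmult (Cpow (Cminus z w) m) (P z))).

Definition denom1 (s t : R) (z : C) (k : nat) : C :=
  Cminus (RtoC (phi s t ^ (S k)))
         (Cmult (RtoC ((phi s t - phi' s t) * phi' s t ^ k)) z).
Definition factor1 (s t : R) (z : C) (k : nat) : C :=
  Cdiv (RtoC (phi s t ^ (S k))) (denom1 s t z k).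

Definition poles1 (s t : R) (z : C) : Prop := exists k : nat, denom1 s t z k = RtoC 0.

Definition factor2 (s t : R) (z : C) (k : nat) : C :=
  Cminus (RtoC 1)
         (Cmult (RtoC ((phi s t - phi' s t) * (phi s t ^ k / phi' s t ^ (S k)))) z).

(* Main.v *)
Require Import Defs.
From Stdlib Require Import Reals Lra Lia Psatz ClassicalEpsilon Classical FunctionalExtensionality.
From Coquelicot Require Import Coquelicot.
Open Scope R_scope.


Lemma DCpow_S (z : C) n : Defs.Cpow z (S n) = (Defs.Cpow z n * z)%C.
Proof. reflexivity. Qed.

Lemma Cmod_DCpow (z : C) n : Cmod (Defs.Cpow z n) = Cmod z ^ n.
Proof. induction n; simpl. apply Cmod_1. rewrite Cmod_mult, IHn. ring. Qed.

Lemma DCpow_mult (a b : C) n : Defs.Cpow (a * b) n = (Defs.Cpow a n * Defs.Cpow b n)%C.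
Proof. induction n; simpl. ring. rewrite IHn. ring. Qed.

Lemma DCpow_RtoC (x : R) n : Defs.Cpow (RtoC x) n = RtoC (x ^ n).
Proof. induction n; simpl. reflexivity. rewrite IHn, <- RtoC_mult. f_equal. ring. Qed.

Lemma Cinv0 : Cinv 0 = 0%C.
Proof. unfold Cinv, RtoC; simpl. unfold Rdiv. apply injective_projections; simpl; ring. Qed.

Lemma lim_C_eps (u : nat -> C) (l : C) :
  filterlim u eventually (locally l) <->
  (forall eps, 0 < eps -> exists N, forall n, (N <= n)%nat -> Cmod (u n - l) < eps).
Proof.
  rewrite filterlim_locally_ball_norm. split.
  - intros H eps Heps. destruct (H (mkposreal eps Heps)) as [N HN]. exists N.
    intros n Hn. specialize (HN n Hn). exact HN.
  - intros H eps. destruct (H eps (cond_pos eps)) as [N HN]. exists N. intros n Hn.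
    apply HN; auto.
Qed.

Lemma QC (f : C -> C) (x l : C) (d M : R) : 0 < d ->
  (forall y, Cmod (y - x) < d -> Cmod (f y - f x - (y - x) * l) <= M * Cmod (y - x) ^ 2) ->
  @is_derive C_AbsRing C_NormedModule f x l.
Proof.
  intros Hd H. split. apply is_linear_scal_l.
  intros x' Hx'. apply (@is_filter_lim_locally_unique C_AbsRing (AbsRing_NormedModule C_AbsRing)) in Hx'. subst x'.
  intros eps.
  assert (Hp : 0 < Rmin d (eps / (Rabs M + 1))).
  { apply Rmin_pos; auto. apply Rdiv_lt_0_compat. apply cond_pos. pose proof (Rabs_pos M); lra. }
  eapply filter_imp; [| apply (@locally_ball_norm C_AbsRing (AbsRing_NormedModule C_AbsRing) x (mkposreal _ Hp))].
  intros y Hy. unfold ball_norm in Hy. simpl in Hy.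
  change (Cmod (f y - f x - (y - x) * l) <= eps * Cmod (y - x)).
  change (Cmod (y - x) < Rmin d (eps / (Rabs M + 1))) in Hy.
  assert (h1 : Cmod (y - x) < d) by (eapply Rlt_le_trans; [apply Hy| apply Rmin_l]).
  assert (h2 : Cmod (y - x) <= eps / (Rabs M + 1)) by (left; eapply Rlt_le_trans; [apply Hy| apply Rmin_r]).
  eapply Rle_trans. apply H; auto.
  set (h := Cmod (y - x)) in *. assert (0 <= h) by apply Cmod_ge_0.
  pose proof (Rle_abs M). pose proof (cond_pos eps).
  assert (h * (Rabs M + 1) <= eps).
  { apply (Rmult_le_compat_r (Rabs M + 1)) in h2. unfold Rdiv in h2. rewrite Rmult_assoc, Rinv_l in h2. lra.
    pose proof (Rabs_pos M); lra. pose proof (Rabs_pos M); lra. }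
  nra.
Qed.

Lemma der_C_to_A f x df : @is_derive C_AbsRing C_NormedModule f x df ->
  @is_derive C_AbsRing (AbsRing_NormedModule C_AbsRing) f x df.
Proof.
intros [H1 H2]. split.
- destruct H1 as [a b [M [HM HH]]]. split; auto. exists M. split; auto.
- intros x' Hx eps. specialize (H2 x' Hx eps). exact H2.
Qed.

Lemma der_A_to_C f x df : @is_derive C_AbsRing (AbsRing_NormedModule C_AbsRing) f x df ->
  @is_derive C_AbsRing C_NormedModule f x df.
Proof.
intros [H1 H2]. split.
- destruct H1 as [a b [M [HM HH]]]. split; auto. exists M. split; auto.
- intros x' Hx eps. specialize (H2 x' Hx eps). exact H2.
Qed.

Lemma holo_mult (f g : C -> C) x : C_holo_at f x -> C_holo_at g x ->
  C_holo_at (fun z => f z * g z)%C x.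
Proof.
  intros [df Hf] [dg Hg]. eexists.
  apply der_A_to_C.
  exact (@is_derive_mult C_AbsRing f g x df dg (der_C_to_A _ _ _ Hf) (der_C_to_A _ _ _ Hg) Cmult_comm).
Qed.

Lemma holo_const (a : C) x : C_holo_at (fun _ => a) x.
Proof. exists (RtoC 0). apply (QC _ _ _ 1 0). lra. intros y _.
  match goal with |- context [Cmod ?e] => replace e with (RtoC 0) by ring end. rewrite Cmod_0. pose proof (Cmod_ge_0 (y-x)). nra. Qed.

Lemma holo_Cprod (F : C -> nat -> C) N x :
  (forall k, (k < N)%nat -> C_holo_at (fun z => F z k) x) ->
  C_holo_at (fun z => Cprod (F z) N) x.
Proof.
  induction N; intros H; simpl. apply holo_const.
  apply holo_mult. apply IHN. intros; apply H; lia. apply H; lia.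
Qed.

Lemma holo_comp_lin (f : C -> C) (a x : C) : C_holo_at f (a * x)%C ->
  C_holo_at (fun z => f (a * z)%C) x.
Proof.
  intros [df Hf]. exists (a * df)%C. apply (@is_derive_comp C_AbsRing C_NormedModule f (fun z => a * z)%C x df a Hf).
  apply der_C_to_A. apply (QC _ _ _ 1 0). lra. intros y _.
  match goal with |- context [Cmod ?e] => replace e with (RtoC 0) by ring end. rewrite Cmod_0. pose proof (Cmod_ge_0 (y-x)). nra.
Qed.

Lemma holo_inv_lin (b x : C) : (1 - b * x)%C <> 0%C ->
  C_holo_at (fun z => / (1 - b * z))%C x.
Proof.
  intros Hx. set (u := (1 - b * x)%C). assert (Hu : 0 < Cmod u) by (apply Cmod_gt_0; auto).
  exists (b / (u * u))%C.
  apply (QC _ _ _ (Cmod u / (2 * (Cmod b + 1))) (2 * Cmod b ^ 2 / (Cmod u ^ 3))).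
  { apply Rdiv_lt_0_compat; auto. pose proof (Cmod_ge_0 b); lra. }
  intros y Hy. set (h := (y - x)%C) in *.
  assert (Hb := Cmod_ge_0 b). assert (Hh := Cmod_ge_0 h).
  assert (E : (1 - b * y)%C = (u - b * h)%C) by (unfold u, h; ring).
  assert (Hbh : Cmod (b * h) <= Cmod u / 2).
  { rewrite Cmod_mult. apply Rlt_le in Hy.
    apply Rle_trans with (Cmod b * (Cmod u / (2 * (Cmod b + 1)))). apply Rmult_le_compat_l; auto.
    unfold Rdiv. rewrite Rinv_mult. 
    assert (Cmod b * / (Cmod b + 1) <= 1). { apply (Rmult_le_reg_r (Cmod b + 1)). lra. rewrite Rmult_assoc, Rinv_l; lra. }
    assert (0 < / 2) by lra. nra. }
  assert (Hv : Cmod u / 2 <= Cmod (1 - b * y)%C).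
  { rewrite E. pose proof (Cmod_triangle (u - b * h) (b * h))%C.
    replace (u - b * h + b * h)%C with u in H by ring. lra. }
  assert (Hv0 : (1 - b * y)%C <> 0%C). { intro Z. rewrite Z, Cmod_0 in Hv. lra. }
  cbv beta. fold u.   replace (/ (1 - b * y) - / u - h * (b / (u * u)))%C with (b * b * h * h / ((1 - b * y) * u * u))%C.
  2:{ rewrite E in *. field. auto. }
  rewrite Cmod_div. 2:{ repeat apply Cmult_neq_0; auto. }
  rewrite !Cmod_mult. 
  assert (0 < Cmod (1 - b * y)%C) by lra.
  apply (Rmult_le_reg_r (Cmod (1 - b * y)%C * Cmod u * Cmod u)). apply Rmult_lt_0_compat; nra.
  unfold Rdiv. rewrite Rmult_assoc, Rinv_l. 2: apply Rgt_not_eq; apply Rmult_lt_0_compat; nra.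
  replace (2 * Cmod b ^ 2 * / Cmod u ^ 3 * Cmod h ^ 2 * (Cmod (1 - b * y)%C * Cmod u * Cmod u))
    with (Cmod b ^ 2 * Cmod h ^ 2 * (2 * Cmod (1 - b * y)%C / Cmod u)) by (field; lra).
  assert (1 <= 2 * Cmod (1 - b * y)%C / Cmod u).
  { apply (Rmult_le_reg_r (Cmod u)); auto. unfold Rdiv. rewrite Rmult_assoc, Rinv_l; lra. }
  assert (0 <= Cmod b ^ 2 * Cmod h ^ 2) by (apply Rmult_le_pos; apply pow2_ge_0).
  nra.
Qed.


Definition Tm (a : nat -> R) (w : C) (n : nat) : C := (RtoC (a n) * Defs.Cpow w n)%C.
Definition absconv (a : nat -> R) (w : C) := ex_series (fun n => Rabs (a n) * Cmod w ^ n).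
Definition Ssum (a : nat -> R) (w : C) : C :=
  epsilon (inhabits (RtoC 0)) (fun l => is_series (Tm a w) l).

Lemma series_unique_C (u : nat -> C) l1 l2 : is_series u l1 -> is_series u l2 -> l1 = l2.
Proof. intros H1 H2. exact (filterlim_locally_unique _ _ _ H1 H2). Qed.

Lemma Ssum_spec a w : absconv a w -> is_series (Tm a w) (Ssum a w).
Proof.
  intros H. unfold Ssum. apply epsilon_spec.
  assert (E : @ex_series C_AbsRing C_CompleteNormedModule (Tm a w)).
  { apply (@ex_series_le C_AbsRing C_CompleteNormedModule _ (fun n => Rabs (a n) * Cmod w ^ n)); auto.
    intros n. change (Cmod (Tm a w n) <= Rabs (a n) * Cmod w ^ n).
    unfold Tm. rewrite Cmod_mult, Cmod_R, Cmod_DCpow. lra. }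
  destruct E as [l Hl]. exists l. exact Hl.
Qed.

Lemma absconv_mono a w v : absconv a w -> Cmod v <= Cmod w -> absconv a v.
Proof.
  intros H Hv. apply (@ex_series_le R_AbsRing R_CompleteNormedModule _ (fun n => Rabs (a n) * Cmod w ^ n)); auto.
  intros n. change (Rabs (Rabs (a n) * Cmod v ^ n) <= Rabs (a n) * Cmod w ^ n).
  rewrite Rabs_pos_eq. apply Rmult_le_compat_l. apply Rabs_pos. apply pow_incr. split; auto. apply Cmod_ge_0.
  apply Rmult_le_pos. apply Rabs_pos. apply pow_le, Cmod_ge_0.
Qed.

Lemma Cmod_rev (X l : C) : Cmod X - Cmod l <= Cmod (X - l) /\ Cmod l - Cmod X <= Cmod (X - l).
Proof.
  split.
  - pose proof (Cmod_triangle (X - l) l). replace (X - l + l)%C with X in H by ring. lra.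
  - pose proof (Cmod_triangle (l - X) X). replace (l - X + X)%C with l in H by ring.
    rewrite <- (Cmod_opp (X - l)). replace (- (X - l))%C with (l - X)%C by ring. lra.
Qed.

Lemma series_norm_le (u : nat -> C) (b : nat -> R) l B :
  is_series u l -> (forall n, Cmod (u n) <= b n) -> is_series b B -> Cmod l <= B.
Proof.
  intros Hu Hb HB.
  assert (Hp : forall N, Cmod (sum_n u N) <= sum_n b N).
  { induction N. rewrite !sum_O. apply Hb.
    rewrite !sum_Sn. change (Cmod (sum_n u N + u (S N))%C <= sum_n b N + b (S N)).
    pose proof (Cmod_triangle (sum_n u N) (u (S N))). pose proof (Hb (S N)). lra. }
  assert (Hl : is_lim_seq (fun N => Cmod (sum_n u N)) (Cmod l)).
  { apply is_lim_seq_spec. intros eps. pose proof (proj1 (lim_C_eps _ _) Hu) as Hu'. destruct (Hu' eps (cond_pos eps)) as [N HN].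
    exists N. intros n Hn. specialize (HN n Hn).
    change (Cmod (@sum_n C_AbelianMonoid u n - l)%C < eps) in HN. pose proof (Cmod_rev (sum_n u n) l). apply Rabs_def1; lra. }
  assert (HB2 : is_lim_seq (sum_n b) B) by exact HB. pose proof (is_lim_seq_le _ _ _ _ Hp Hl HB2). exact H.
Qed.

Lemma Tm_0 a : a 0%nat = 1 -> is_series (Tm a (RtoC 0)) (RtoC 1).
Proof.
  intros H0. apply lim_C_eps. intros eps Heps. exists 0%nat. intros n _.
  assert (E : sum_n (Tm a (RtoC 0)) n = RtoC 1).
  { induction n. rewrite sum_O. unfold Tm; simpl. rewrite H0. ring.
    rewrite sum_Sn, IHn. change (RtoC 1 + Tm a (RtoC 0) (S n) = RtoC 1)%C. unfold Tm. rewrite DCpow_S. ring. }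
  change (Cmod (@sum_n C_AbelianMonoid (Tm a (RtoC 0)) n - RtoC 1)%C < eps). rewrite E. replace (RtoC 1 - RtoC 1)%C with (RtoC 0) by ring. rewrite Cmod_0. auto.
Qed.


Definition GoodSeq (a : nat -> R) (q c r : R) : Prop :=
  a 0%nat = 1 /\ (forall n, a (S n) * (1 - q ^ S n) = c * a n * r ^ n) /\ Rabs q < 1 /\ Rabs r <= 1.
Definition Kc (q c : R) := Rabs c / (1 - Rabs q) + 1.
Definition R0 (q c : R) := / (4 * Kc q c).

Lemma nat_sq_le n : (n * n <= 4 * 2 ^ n /\ 2 * n + 1 <= 4 * 2 ^ n)%nat.
Proof.
  induction n. simpl; lia. rewrite Nat.pow_succ_r'. destruct IHn. split; nia.
Qed.

Lemma INR_sq_le n : INR n ^ 2 <= 4 * 2 ^ n.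
Proof.
  destruct (nat_sq_le n) as [H _]. apply le_INR in H. rewrite mult_INR, mult_INR, pow_INR in H.
  replace (INR 4) with 4 in H by (simpl; ring). replace (INR 2) with 2 in H by (simpl; ring). 
  replace (INR n ^ 2) with (INR n * INR n) by ring. lra.
Qed.

Lemma INR_le_pow n : INR n <= 4 * 2 ^ n.
Proof.
  destruct (nat_sq_le n) as [_ H]. apply le_INR in H. rewrite plus_INR, mult_INR, mult_INR, pow_INR in H.
  replace (INR 4) with 4 in H by (simpl; ring). replace (INR 2) with 2 in H by (simpl; ring). replace (INR 1) with 1 in H by (simpl; ring).
  pose proof (pos_INR n). lra.
Qed.

Lemma pow_le_1 x n : 0 <= x <= 1 -> x ^ n <= 1.
Proof. intros H. rewrite <- (pow1 n). apply pow_incr. auto. Qed.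

Section Generic.
Variables (a : nat -> R) (q c r : R).
Hypothesis HG : GoodSeq a q c r.

Lemma Kc_ge1 : 1 <= Kc q c.
Proof. destruct HG as [_ [_ [Hq _]]]. unfold Kc. assert (0 <= Rabs c / (1 - Rabs q)).
  apply Rdiv_le_0_compat. apply Rabs_pos. lra. lra. Qed.

Lemma R0_pos : 0 < R0 q c.
Proof. pose proof Kc_ge1. unfold R0. apply Rinv_0_lt_compat. lra. Qed.

Lemma KR0 : Kc q c * R0 q c = / 4.
Proof. pose proof Kc_ge1. unfold R0. field. lra. Qed.

Lemma a_bound n : Rabs (a n) <= Kc q c ^ n.
Proof.
  destruct HG as [H0 [Hr [Hq Hrr]]]. pose proof Kc_ge1 as HK.
  induction n. simpl. rewrite H0, Rabs_R1. lra.
  assert (Hqn : Rabs (q ^ S n) <= Rabs q).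
  { rewrite <- RPow_abs, <- tech_pow_Rmult. assert (Rabs q ^ n <= 1). apply pow_le_1. split. apply Rabs_pos. lra.
    pose proof (Rabs_pos q). nra. }
  assert (H1 : 1 - Rabs q <= Rabs (1 - q ^ S n)).
  { pose proof (Rabs_triang_inv 1 (q ^ S n)). rewrite Rabs_R1 in H. lra. }
  assert (Hrn : Rabs (r ^ n) <= 1). { rewrite <- RPow_abs. apply pow_le_1. split. apply Rabs_pos. auto. }
  assert (E : Rabs (a (S n)) * Rabs (1 - q ^ S n) = Rabs c * Rabs (a n) * Rabs (r ^ n)).
  { rewrite <- !Rabs_mult. rewrite Hr. reflexivity. }
  assert (Hb : Rabs (a (S n)) * (1 - Rabs q) <= Rabs c * Rabs (a n)).
  { apply Rle_trans with (Rabs (a (S n)) * Rabs (1 - q ^ S n)). apply Rmult_le_compat_l; auto. apply Rabs_pos.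
    rewrite E. rewrite <- (Rmult_1_r (Rabs c * Rabs (a n))) at 2. apply Rmult_le_compat_l; auto.
    apply Rmult_le_pos; apply Rabs_pos. }
  assert (Rabs (a (S n)) <= Rabs c / (1 - Rabs q) * Rabs (a n)).
  { apply (Rmult_le_reg_r (1 - Rabs q)). lra. unfold Rdiv.
    replace (Rabs c * / (1 - Rabs q) * Rabs (a n) * (1 - Rabs q)) with (Rabs c * Rabs (a n)) by (field; lra). auto. }
  simpl. assert (0 <= Rabs c / (1 - Rabs q)). apply Rdiv_le_0_compat. apply Rabs_pos. lra.
  pose proof (Rabs_pos (a n)). unfold Kc in *. nra.
Qed.

Lemma absconv_small w : Cmod w <= 2 * R0 q c -> absconv a w.
Proof.
  intros Hw. pose proof Kc_ge1. pose proof R0_pos. pose proof KR0.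
  apply (@ex_series_le R_AbsRing R_CompleteNormedModule _ (fun n => (/ 2) ^ n)).
  2:{ apply ex_series_geom. rewrite Rabs_pos_eq; lra. }
  intros n. change (Rabs (Rabs (a n) * Cmod w ^ n) <= (/ 2) ^ n).
  rewrite Rabs_pos_eq. 2:{ apply Rmult_le_pos. apply Rabs_pos. apply pow_le, Cmod_ge_0. }
  apply Rle_trans with (Kc q c ^ n * (2 * R0 q c) ^ n).
  apply Rmult_le_compat. apply Rabs_pos. apply pow_le, Cmod_ge_0. apply a_bound. apply pow_incr. split; auto. apply Cmod_ge_0.
  rewrite <- Rpow_mult_distr. replace (Kc q c * (2 * R0 q c)) with (/ 2) by lra. lra.
Qed.

Definition Ud (x : C) (n : nat) : C := (RtoC (a n * INR n) * Defs.Cpow x (pred n))%C.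
Definition Sd (x : C) : C := epsilon (inhabits (RtoC 0)) (fun l => is_series (Ud x) l).

Lemma Ud_bound x n : Cmod x <= R0 q c -> Cmod (Ud x n) <= 4 * (/ 2) ^ n / R0 q c.
Proof.
  intros Hx. pose proof Kc_ge1. pose proof R0_pos as Hr. pose proof KR0.
  unfold Ud. rewrite Cmod_mult, Cmod_R, Cmod_DCpow, Rabs_mult, (Rabs_pos_eq (INR n)) by apply pos_INR.
  apply (Rmult_le_reg_l (R0 q c)); auto.
  unfold Rdiv. replace (R0 q c * (4 * (/ 2) ^ n * / R0 q c)) with (4 * (/2)^n) by (field; lra).
  destruct n as [|m]. simpl. lra.
  simpl pred.
  apply Rle_trans with (R0 q c * (Kc q c ^ S m * INR (S m) * R0 q c ^ m)).
  { apply Rmult_le_compat_l. lra. apply Rmult_le_compat. apply Rmult_le_pos. apply Rabs_pos. apply pos_INR.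
    apply pow_le, Cmod_ge_0. apply Rmult_le_compat_r. apply pos_INR. apply a_bound. apply pow_incr. split; auto. apply Cmod_ge_0. }
  replace (R0 q c * (Kc q c ^ S m * INR (S m) * R0 q c ^ m)) with (INR (S m) * (Kc q c * R0 q c) ^ S m)
    by (rewrite Rpow_mult_distr; simpl; ring).
  rewrite H0. pose proof (INR_le_pow (S m)).
  replace ((/ 2) ^ S m) with (2 ^ S m * (/ 4) ^ S m).
  2:{ rewrite <- Rpow_mult_distr. f_equal. lra. }
  assert (0 < (/ 4) ^ S m) by (apply pow_lt; lra). nra.
Qed.

Lemma Sd_spec x : Cmod x <= R0 q c -> is_series (Ud x) (Sd x).
Proof.
  intros Hx. unfold Sd. apply epsilon_spec.
  assert (E : @ex_series C_AbsRing C_CompleteNormedModule (Ud x)).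
  { apply (@ex_series_le C_AbsRing C_CompleteNormedModule _ (fun n => 4 * (/ 2) ^ n / R0 q c)).
    intros n. apply (Ud_bound x n Hx).
    unfold Rdiv. apply (ex_series_ext (fun n => scal (4 / R0 q c) ((/2)^n))).
    intros n. change (4 / R0 q c * (/ 2) ^ n = 4 * (/ 2) ^ n * / R0 q c). unfold Rdiv; ring.
    apply (@ex_series_scal_l R_AbsRing R_NormedModule). apply ex_series_geom. rewrite Rabs_pos_eq; lra. }
  destruct E as [l Hl]. exists l. exact Hl.
Qed.

Definition Dn (x y : C) (n : nat) : C :=
  (Defs.Cpow y n - Defs.Cpow x n - RtoC (INR n) * Defs.Cpow x (pred n) * (y - x))%C.

Lemma Dn_S x y n : Dn x y (S n) = (y * Dn x y n + RtoC (INR n) * Defs.Cpow x (pred n) * (y - x) * (y - x))%C.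
Proof.
  unfold Dn. destruct n as [|m].
  - simpl. replace (INR 1) with 1 by (simpl; ring). replace (INR 0) with 0 by (simpl; ring). ring.
  - simpl pred. rewrite !DCpow_S. rewrite (S_INR (S m)), RtoC_plus. ring.
Qed.

Lemma Dn_bound x y n (rho : R) : 0 < rho -> Cmod x <= rho -> Cmod y <= rho ->
  rho ^ 2 * Cmod (Dn x y n) <= INR n ^ 2 * rho ^ n * Cmod (y - x) ^ 2.
Proof.
  intros Hr Hx Hy. induction n.
  - unfold Dn. simpl. match goal with |- context [Cmod ?e] => replace e with (RtoC 0) by ring end.
    rewrite Cmod_0. lra.
  - rewrite Dn_S. set (h := Cmod (y - x)). assert (0 <= h) by apply Cmod_ge_0.
    eapply Rle_trans. apply Rmult_le_compat_l. apply pow_le; lra. apply Cmod_triangle.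
    rewrite !Cmod_mult, Cmod_R, Cmod_DCpow, Rabs_pos_eq by apply pos_INR. fold h.
    assert (E2 : rho ^ 2 * (INR n * Cmod x ^ pred n * h * h) <= INR n * rho ^ S n * h ^ 2).
    { destruct n as [|m]. simpl. lra. simpl pred.
      assert (Cmod x ^ m <= rho ^ m) by (apply pow_incr; split; auto; apply Cmod_ge_0).
      pose proof (pos_INR (S m)). assert (0 <= h * h) by nra.
      replace (INR (S m) * rho ^ S (S m) * h ^ 2) with (rho ^ 2 * (INR (S m) * rho ^ m * h * h)) by (simpl; ring).
      apply Rmult_le_compat_l. nra. apply Rmult_le_compat_r; auto. apply Rmult_le_compat_r; auto.
      apply Rmult_le_compat_l; auto. }
    assert (E1 : rho ^ 2 * (Cmod y * Cmod (Dn x y n)) <= rho * (INR n ^ 2 * rho ^ n * h ^ 2)).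
    { replace (rho ^ 2 * (Cmod y * Cmod (Dn x y n))) with (Cmod y * (rho ^ 2 * Cmod (Dn x y n))) by ring.
      apply Rmult_le_compat; auto. apply Cmod_ge_0. apply Rmult_le_pos. apply pow_le; lra. apply Cmod_ge_0. }
    rewrite S_INR. simpl pow in *. pose proof (pos_INR n). 
    assert (0 <= INR n * (rho * rho ^ n) * h ^ 2). { apply Rmult_le_pos. apply Rmult_le_pos; auto. apply Rmult_le_pos. lra. apply pow_le; lra. apply pow2_ge_0. }
    assert (0 <= rho * rho ^ n * (h * (h * 1))). { apply Rmult_le_pos. apply Rmult_le_pos. lra. apply pow_le; lra. nra. }
    nra.
Qed.

End Generic.


Section Generic2.
Variables (a : nat -> R) (q c r : R).
Hypothesis HG : GoodSeq a q c r.

Lemma geom_series_bound (k : R) : is_series (fun n => 4 * (/ 2) ^ n * k) (8 * k).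
Proof.
  pose proof (is_series_geom (/ 2)) as H. rewrite Rabs_pos_eq in H by lra.
  specialize (H ltac:(lra)). replace (/ (1 - / 2)) with 2 in H by field.
  pose proof (@is_series_scal_l R_AbsRing R_NormedModule (4 * k) _ _ H) as H2.
  replace (8 * k) with ((4 * k) * 2) by ring.
  apply (is_series_ext (fun n => (4 * k) * (/ 2) ^ n)). 2: exact H2. intros n; simpl; ring.
Qed.

Lemma S_quad x : Cmod x < R0 q c -> forall y, Cmod (y - x) < R0 q c - Cmod x ->
  Cmod (Ssum a y - Ssum a x - (y - x) * Sd a x) <= 8 / R0 q c ^ 2 * Cmod (y - x) ^ 2.
Proof.
  intros Hx y Hy. pose proof (R0_pos a q c r HG) as Hr. pose proof (KR0 a q c r HG) as HKR.
  pose proof (Kc_ge1 a q c r HG) as HK. set (rho := R0 q c) in *.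
  assert (Hyr : Cmod y <= rho).
  { pose proof (Cmod_triangle x (y - x)). replace (x + (y - x))%C with y in H by ring. lra. }
  assert (Hy2 : Cmod y <= 2 * rho) by lra. assert (Hx2 : Cmod x <= 2 * rho) by lra. assert (Hx1 : Cmod x <= rho) by lra.
  assert (HSy := Ssum_spec a y (absconv_small a q c r HG y Hy2)).
  assert (HSx := Ssum_spec a x (absconv_small a q c r HG x Hx2)).
  assert (HU := Sd_spec a q c r HG x Hx1).
  pose proof (@is_series_minus C_AbsRing C_NormedModule _ _ _ _ HSy HSx) as H1.
  pose proof (@is_series_scal_l C_AbsRing C_NormedModule (y - x)%C _ _ HU) as H2.
  pose proof (@is_series_minus C_AbsRing C_NormedModule _ _ _ _ H1 H2) as H3.
  set (h := Cmod (y - x)) in *.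
  assert (Hb : forall n, Cmod ((fun n => (Tm a y n - Tm a x n - (y - x) * Ud a x n)%C) n) <= 4 * (/ 2) ^ n * (h ^ 2 / rho ^ 2)).
  { intros n. cbv beta.
    replace (Tm a y n - Tm a x n - (y - x) * Ud a x n)%C with (RtoC (a n) * Dn x y n)%C.
    2:{ unfold Tm, Ud, Dn. rewrite RtoC_mult. ring. }
    rewrite Cmod_mult, Cmod_R.
    pose proof (Dn_bound x y n rho Hr Hx1 Hyr) as HD. fold h in HD.
    pose proof (a_bound a q c r HG n) as Ha. pose proof (INR_sq_le n) as Hn.
    assert (0 < rho ^ 2) by (apply pow_lt; auto).
    apply (Rmult_le_reg_r (rho ^ 2)); auto. unfold Rdiv.
    replace (4 * (/ 2) ^ n * (h ^ 2 * / rho ^ 2) * rho ^ 2) with (4 * (/ 2) ^ n * h ^ 2) by (field; lra).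
    apply Rle_trans with (Kc q c ^ n * (INR n ^ 2 * rho ^ n * h ^ 2)).
    { rewrite Rmult_assoc. apply Rmult_le_compat. apply Rabs_pos. apply Rmult_le_pos. apply Cmod_ge_0. lra. auto.
      rewrite Rmult_comm. auto. }
    replace (Kc q c ^ n * (INR n ^ 2 * rho ^ n * h ^ 2)) with (INR n ^ 2 * (Kc q c * rho) ^ n * h ^ 2)
      by (rewrite Rpow_mult_distr; ring).
    rewrite HKR. replace ((/ 2) ^ n) with (2 ^ n * (/ 4) ^ n) by (rewrite <- Rpow_mult_distr; f_equal; lra).
    assert (0 < (/ 4) ^ n) by (apply pow_lt; lra). assert (0 <= h ^ 2) by apply pow2_ge_0.
    assert (0 <= (/ 4) ^ n * h ^ 2) by nra. nra. }
  pose proof (series_norm_le _ _ _ _ H3 Hb (geom_series_bound _)) as Hf.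
  unfold Rdiv in *. replace (8 * / rho ^ 2 * h ^ 2) with (8 * (h ^ 2 * / rho ^ 2)) by ring. exact Hf.
Qed.

Lemma holo_S x : Cmod x < R0 q c -> C_holo_at (Ssum a) x.
Proof.
  intros Hx. exists (Sd a x). apply (QC _ _ _ (R0 q c - Cmod x) (8 / R0 q c ^ 2)). lra.
  apply S_quad; auto.
Qed.

Lemma S_0 : Ssum a (RtoC 0) = RtoC 1.
Proof.
  destruct HG as [H0 _]. pose proof (R0_pos a q c r HG).
  apply (series_unique_C (Tm a (RtoC 0))). apply Ssum_spec. apply (absconv_small a q c r HG). rewrite Cmod_0; lra.
  apply Tm_0; auto.
Qed.

Lemma S_near1 eps : 0 < eps -> exists d, 0 < d /\ forall y, Cmod y < d -> Cmod (Ssum a y - RtoC 1) < eps.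
Proof.
  intros He. pose proof (R0_pos a q c r HG) as Hr. set (rho := R0 q c) in *.
  set (L := Cmod (Sd a (RtoC 0))). set (M := 8 / rho ^ 2).
  assert (HL : 0 <= L) by apply Cmod_ge_0. assert (HM : 0 <= M) by (unfold M; apply Rdiv_le_0_compat; [lra| apply pow_lt; auto]).
  exists (Rmin rho (Rmin 1 (eps / (L + M + 1)))). split.
  { apply Rmin_pos; auto. apply Rmin_pos. lra. apply Rdiv_lt_0_compat; lra. }
  intros y Hy.
  assert (Hy1 : Cmod y < rho) by (eapply Rlt_le_trans; [apply Hy | apply Rmin_l]).
  assert (Hy2 : Cmod y < Rmin 1 (eps / (L + M + 1))) by (eapply Rlt_le_trans; [apply Hy | apply Rmin_r]).
  assert (Hy3 : Cmod y <= 1) by (left; eapply Rlt_le_trans; [apply Hy2 | apply Rmin_l]).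
  assert (Hy4 : Cmod y < eps / (L + M + 1)) by (eapply Rlt_le_trans; [apply Hy2 | apply Rmin_r]).
  assert (H0r : Cmod (RtoC 0) < R0 q c) by (rewrite Cmod_0; exact Hr). pose proof (S_quad (RtoC 0) H0r y) as Q.
  replace (y - RtoC 0)%C with y in Q by ring. rewrite Cmod_0, Rminus_0_r, S_0 in Q. specialize (Q Hy1). fold rho M in Q.
  replace (Ssum a y - RtoC 1)%C with ((Ssum a y - RtoC 1 - y * Sd a (RtoC 0)) + y * Sd a (RtoC 0))%C by ring.
  eapply Rle_lt_trans. apply Cmod_triangle. rewrite Cmod_mult. fold L.
  assert (0 <= Cmod y) by apply Cmod_ge_0.
  assert (Cmod y * (L + M + 1) < eps).
  { apply (Rmult_lt_compat_r (L + M + 1)) in Hy4. unfold Rdiv in Hy4. rewrite Rmult_assoc, Rinv_l in Hy4; lra. lra. }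
  assert (M * Cmod y ^ 2 <= M * Cmod y) by (simpl; apply Rmult_le_compat_l; auto; nra).
  nra.
Qed.

Lemma S_seq1 w : filterlim (fun N => Ssum a (RtoC (q ^ N) * w)%C) eventually (locally (RtoC 1)).
Proof.
  destruct HG as [_ [_ [Hq _]]].
  apply lim_C_eps. intros eps He. destruct (S_near1 eps He) as [d [Hd Hy]].
  destruct (pow_lt_1_zero q Hq (d / (Cmod w + 1))) as [N HN].
  { apply Rdiv_lt_0_compat; auto. pose proof (Cmod_ge_0 w); lra. }
  exists N. intros n Hn. apply Hy. rewrite Cmod_mult, Cmod_R.
  specialize (HN n Hn). pose proof (Cmod_ge_0 w). pose proof (Rabs_pos (q ^ n)).
  apply Rle_lt_trans with (Rabs (q ^ n) * (Cmod w + 1)). apply Rmult_le_compat_l; lra.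
  apply (Rmult_lt_compat_r (Cmod w + 1)) in HN. unfold Rdiv in HN. rewrite Rmult_assoc, Rinv_l in HN; lra. lra.
Qed.

End Generic2.


Lemma elem_lim (X Y : nat -> C) (A : C) :
  (forall N, (X N * Y N)%C = A) -> filterlim Y eventually (locally (RtoC 1)) ->
  filterlim X eventually (locally A).
Proof.
  intros HXY HY. apply lim_C_eps. intros eps He. rewrite lim_C_eps in HY.
  set (LA := Cmod A). assert (HLA : 0 <= LA) by apply Cmod_ge_0.
  destruct (HY (Rmin (/ 2) (eps / (2 * LA + 1)))) as [N HN].
  { apply Rmin_pos. lra. apply Rdiv_lt_0_compat; lra. }
  exists N. intros n Hn. specialize (HN n Hn).
  assert (H1 : Cmod (Y n - RtoC 1) < / 2) by (eapply Rlt_le_trans; [apply HN | apply Rmin_l]).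
  assert (H2 : Cmod (Y n - RtoC 1) < eps / (2 * LA + 1)) by (eapply Rlt_le_trans; [apply HN | apply Rmin_r]).
  assert (HYn : / 2 <= Cmod (Y n)).
  { pose proof (Cmod_rev (Y n) (RtoC 1)) as [_ Hr]. rewrite Cmod_1 in Hr. lra. }
  assert (HX : Cmod (X n) * Cmod (Y n) = LA) by (unfold LA; rewrite <- Cmod_mult, HXY; reflexivity).
  assert (HXb : Cmod (X n) <= 2 * LA).
  { pose proof (Cmod_ge_0 (X n)). nra. }
  replace (X n - A)%C with (X n * (RtoC 1 - Y n))%C by (rewrite <- (HXY n); ring).
  rewrite Cmod_mult. rewrite <- (Cmod_opp (RtoC 1 - Y n)). replace (- (RtoC 1 - Y n))%C with (Y n - RtoC 1)%C by ring.
  pose proof (Cmod_ge_0 (Y n - RtoC 1)). pose proof (Cmod_ge_0 (X n)).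
  apply Rle_lt_trans with (2 * LA * Cmod (Y n - RtoC 1)). apply Rmult_le_compat_r; auto.
  apply Rle_lt_trans with ((2 * LA + 1) * Cmod (Y n - RtoC 1)). nra.
  apply (Rmult_lt_compat_l (2 * LA + 1)) in H2. 2: lra. unfold Rdiv in H2.
  rewrite <- Rmult_assoc, (Rmult_comm (2 * LA + 1) eps), Rmult_assoc, Rinv_r in H2; lra.
Qed.

Section Generic3.
Variables (a : nat -> R) (q c r : R).
Hypothesis HG : GoodSeq a q c r.

Lemma FE w : absconv a w -> absconv a (RtoC q * w)%C -> absconv a (RtoC r * w)%C ->
  (Ssum a w - Ssum a (RtoC q * w))%C = (RtoC c * w * Ssum a (RtoC r * w))%C.
Proof.
  destruct HG as [H0 [Hrec _]].
  intros Hw Hqw Hrw.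
  pose proof (@is_series_minus C_AbsRing C_NormedModule _ _ _ _ (Ssum_spec a w Hw) (Ssum_spec a _ Hqw)) as H1.
  pose proof (@is_series_scal_l C_AbsRing C_NormedModule (RtoC c * w)%C _ _ (Ssum_spec a _ Hrw)) as H2.
  apply (series_unique_C (fun n => Tm a w n - Tm a (RtoC q * w) n)%C). exact H1.
  apply (@is_series_decr_1 C_AbsRing C_NormedModule).
  match goal with |- is_series _ ?e => replace e with (RtoC c * w * Ssum a (RtoC r * w))%C end.
  2:{ change (RtoC c * w * Ssum a (RtoC r * w) = RtoC c * w * Ssum a (RtoC r * w) + - (Tm a w 0 - Tm a (RtoC q * w) 0))%C.
      unfold Tm; simpl. ring. }
  eapply is_series_ext; [| exact H2]. intros k. simpl.
  change (RtoC c * w * Tm a (RtoC r * w) k = Tm a w (S k) - Tm a (RtoC q * w) (S k))%C.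
  replace (Tm a w (S k) - Tm a (RtoC q * w) (S k))%C with (RtoC (a (S k) * (1 - q ^ S k)) * Defs.Cpow w (S k))%C.
  2:{ unfold Tm. rewrite DCpow_mult, DCpow_RtoC, RtoC_mult, RtoC_minus. ring. }
  rewrite Hrec. unfold Tm. rewrite DCpow_mult, DCpow_RtoC, !RtoC_mult, DCpow_S. ring.
Qed.

End Generic3.


Lemma Cprod_add (f : nat -> C) N M : Cprod f (N + M) = (Cprod f N * Cprod (fun k => f (N + k)%nat) M)%C.
Proof. induction M. simpl. rewrite Nat.add_0_r. ring. rewrite Nat.add_succ_r. simpl. rewrite IHM. ring. Qed.

Lemma lim_scal (u : nat -> C) (L k : C) : filterlim u eventually (locally L) ->
  filterlim (fun n => k * u n)%C eventually (locally (k * L)%C).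
Proof.
  rewrite !lim_C_eps. intros H eps He.
  destruct (H (eps / (Cmod k + 1))) as [N HN]. apply Rdiv_lt_0_compat; auto. pose proof (Cmod_ge_0 k); lra.
  exists N. intros n Hn. specialize (HN n Hn).
  replace (k * u n - k * L)%C with (k * (u n - L))%C by ring. rewrite Cmod_mult.
  pose proof (Cmod_ge_0 k). pose proof (Cmod_ge_0 (u n - L)).
  apply Rle_lt_trans with ((Cmod k + 1) * Cmod (u n - L)). nra.
  apply (Rmult_lt_compat_l (Cmod k + 1)) in HN. 2: lra. unfold Rdiv in HN.
  rewrite <- Rmult_assoc, (Rmult_comm (Cmod k + 1) eps), Rmult_assoc, Rinv_r in HN; lra.
Qed.

Lemma lim_shift (u : nat -> C) (L : C) N0 : filterlim (fun M => u (N0 + M)%nat) eventually (locally L) ->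
  filterlim u eventually (locally L).
Proof.
  rewrite !lim_C_eps. intros H eps He. destruct (H eps He) as [N HN]. exists (N0 + N)%nat.
  intros n Hn. replace n with (N0 + (n - N0))%nat by lia. apply HN. lia.
Qed.

Lemma absconv_pow a q z k : Rabs q <= 1 -> absconv a z -> absconv a (RtoC (q ^ k) * z)%C.
Proof.
  intros Hq H. apply (absconv_mono a z); auto. rewrite Cmod_mult, Cmod_R, <- RPow_abs.
  pose proof (Cmod_ge_0 z). assert (Rabs q ^ k <= 1) by (apply pow_le_1; split; auto; apply Rabs_pos). nra.
Qed.

Definition F1 (c q : R) (z : C) (k : nat) : C := (/ (1 - RtoC c * (RtoC (q ^ k) * z)))%C.
Definition F2 (c q : R) (z : C) (k : nat) : C := (1 + RtoC c * (RtoC (q ^ k) * z))%C.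

Lemma IT1 a q c : GoodSeq a q c 1 -> forall z, absconv a z -> forall N,
  (forall k, (k < N)%nat -> (1 - RtoC c * (RtoC (q ^ k) * z))%C <> 0%C) ->
  Ssum a z = (Cprod (F1 c q z) N * Ssum a (RtoC (q ^ N) * z))%C.
Proof.
  intros HG z Hz. pose proof HG as [_ [_ [Hq _]]]. induction N; intros Hk.
  - simpl. replace (RtoC 1 * z)%C with z by ring. ring.
  - rewrite IHN by (intros; apply Hk; lia). simpl Cprod. rewrite <- Cmult_assoc. f_equal.
    set (w := (RtoC (q ^ N) * z)%C).
    assert (Hw : absconv a w) by (apply absconv_pow; auto; lra).
    assert (Hqw : absconv a (RtoC q * w)%C). { replace (RtoC q * w)%C with (RtoC (q ^ 1) * w)%C by (f_equal; f_equal; ring). apply absconv_pow; auto; lra. }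
    assert (Hrw : absconv a (RtoC 1 * w)%C). { replace (RtoC 1 * w)%C with w by ring. auto. }
    pose proof (FE a q c 1 HG w Hw Hqw Hrw) as Hfe.
    replace (RtoC 1 * w)%C with w in Hfe by ring.
    replace (RtoC (q ^ S N) * z)%C with (RtoC q * w)%C by (unfold w; simpl; rewrite RtoC_mult; ring).
    assert (Hd : (1 - RtoC c * w)%C <> 0%C) by (apply Hk; lia).
    unfold F1. fold w. 
    assert (E : Ssum a (RtoC q * w) = (Ssum a w * (1 - RtoC c * w))%C).
    { replace (Ssum a (RtoC q * w)) with (Ssum a w - (Ssum a w - Ssum a (RtoC q * w)))%C by ring. rewrite Hfe. ring. }
    rewrite E. field. auto.
Qed.

Lemma IT2 a q c : GoodSeq a q c q -> forall z, absconv a z -> forall N,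
  Ssum a z = (Cprod (F2 c q z) N * Ssum a (RtoC (q ^ N) * z))%C.
Proof.
  intros HG z Hz. pose proof HG as [_ [_ [Hq _]]]. induction N.
  - simpl. replace (RtoC 1 * z)%C with z by ring. ring.
  - rewrite IHN. simpl Cprod. rewrite <- Cmult_assoc. f_equal.
    set (w := (RtoC (q ^ N) * z)%C).
    assert (Hw : absconv a w) by (apply absconv_pow; auto; lra).
    assert (Hqw : absconv a (RtoC q * w)%C). { replace (RtoC q * w)%C with (RtoC (q ^ 1) * w)%C by (f_equal; f_equal; ring). apply absconv_pow; auto; lra. }
    pose proof (FE a q c q HG w Hw Hqw Hqw) as Hfe.
    replace (RtoC (q ^ S N) * z)%C with (RtoC q * w)%C by (unfold w; simpl; rewrite RtoC_mult; ring).
    unfold F2. fold w.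
    replace (Ssum a w) with (Ssum a w - Ssum a (RtoC q * w) + Ssum a (RtoC q * w))%C by ring. rewrite Hfe. ring.
Qed.

Lemma cR0_small a q c r : GoodSeq a q c r -> Rabs c * (2 * R0 q c) < 1.
Proof.
  intros HG. pose proof (Kc_ge1 a q c r HG). pose proof (KR0 a q c r HG). pose proof (R0_pos a q c r HG).
  destruct HG as [_ [_ [Hq _]]].
  assert (Rabs c <= Rabs c / (1 - Rabs q)).
  { unfold Rdiv. pose proof (Rabs_pos c). assert (1 <= / (1 - Rabs q)).
    { rewrite <- Rinv_1. apply Rinv_le_contravar. pose proof (Rabs_pos q); lra. pose proof (Rabs_pos q); lra. }
    nra. }
  assert (Rabs c < Kc q c) by (unfold Kc; lra).
  assert (Rabs c * R0 q c < Kc q c * R0 q c) by (apply Rmult_lt_compat_r; auto).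
  lra.
Qed.

Lemma one_minus_nz (X : C) : Cmod X < 1 -> (1 - X)%C <> 0%C.
Proof. intros H E. assert (X = RtoC 1). { replace X with (RtoC 1 - (RtoC 1 - X))%C by ring. rewrite E. ring. }
  rewrite H0, Cmod_1 in H. lra. Qed.

Lemma base1 a q c : GoodSeq a q c 1 -> forall w, Cmod w <= 2 * R0 q c ->
  filterlim (Cprod (F1 c q w)) eventually (locally (Ssum a w)).
Proof.
  intros HG w Hw. pose proof HG as [_ [_ [Hq _]]]. pose proof (cR0_small a q c 1 HG).
  apply (elem_lim _ (fun N => Ssum a (RtoC (q ^ N) * w)%C)).
  - intros N. symmetry. apply IT1; auto. apply (absconv_small a q c 1 HG); auto.
    intros k _. apply one_minus_nz. rewrite !Cmod_mult, !Cmod_R, <- RPow_abs.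
    assert (Rabs q ^ k <= 1) by (apply pow_le_1; split; [apply Rabs_pos| lra]).
    pose proof (Rabs_pos c). pose proof (Cmod_ge_0 w). pose proof (Rabs_pos q).
    assert (0 <= Rabs q ^ k) by (apply pow_le; auto).
    assert (Rabs q ^ k * Cmod w <= 2 * R0 q c) by nra. nra.
  - apply (S_seq1 a q c 1 HG).
Qed.

Lemma lim1 a q c : GoodSeq a q c 1 -> forall z N0, Cmod (RtoC (q ^ N0) * z)%C <= 2 * R0 q c ->
  filterlim (Cprod (F1 c q z)) eventually (locally (Cprod (F1 c q z) N0 * Ssum a (RtoC (q ^ N0) * z))%C).
Proof.
  intros HG z N0 H. apply (lim_shift _ _ N0).
  eapply filterlim_ext. 2: apply lim_scal; apply (base1 a q c HG _ H).
  intros M. cbv beta. rewrite Cprod_add. f_equal.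
  clear H. induction M. reflexivity. simpl. rewrite IHM. f_equal.
  unfold F1. rewrite pow_add, RtoC_mult. f_equal. ring.
Qed.

Lemma existsN q c z : Rabs q < 1 -> 0 < c -> exists N0, Cmod (RtoC (q ^ N0) * z)%C <= c.
Proof.
  intros Hq Hc. destruct (pow_lt_1_zero q Hq (c / (Cmod z + 1))) as [N HN].
  apply Rdiv_lt_0_compat; auto. pose proof (Cmod_ge_0 z); lra.
  exists N. specialize (HN N (le_n N)). rewrite Cmod_mult, Cmod_R. pose proof (Cmod_ge_0 z). pose proof (Rabs_pos (q ^ N)).
  apply (Rmult_lt_compat_r (Cmod z + 1)) in HN. unfold Rdiv in HN. rewrite Rmult_assoc, Rinv_l in HN. nra. lra. lra.
Qed.

Lemma absconv_all a q c : GoodSeq a q c q -> c <> 0 -> q <> 0 -> forall z, absconv a z.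
Proof.
  intros HG Hc Hq0 z. pose proof HG as [H0 [Hrec [Hq _]]].
  assert (Hnz : forall n, a n <> 0).
  { induction n. rewrite H0; lra. intro E. specialize (Hrec n). rewrite E in Hrec.
    assert (c * a n * q ^ n <> 0). { apply Rmult_integral_contrapositive. split. apply Rmult_integral_contrapositive; auto. apply pow_nonzero; auto. }
    lra. }
  set (x := Cmod z + 1). assert (Hx : 0 < x) by (pose proof (Cmod_ge_0 z); unfold x; lra).
  apply (absconv_mono a (RtoC x)). 2:{ rewrite Cmod_R, Rabs_pos_eq; unfold x; pose proof (Cmod_ge_0 z); lra. }
  unfold absconv. rewrite Cmod_R, Rabs_pos_eq by lra.
  apply (ex_series_ext (fun n => Rabs (a n * x ^ n))). intros n. rewrite Rabs_mult, <- RPow_abs, (Rabs_pos_eq x) by lra. reflexivity.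
  apply (ex_series_DAlembert _ 0). lra.
  intros n. apply Rmult_integral_contrapositive. split; auto. apply pow_nonzero; lra.
  assert (Hqq : 0 <= Rabs q < 1) by (split; [apply Rabs_pos|auto]).
  apply (is_lim_seq_le_le (fun _ => 0) _ (fun n => (Rabs c * x / (1 - Rabs q)) * Rabs q ^ n)).
  - intros n. split. apply Rabs_pos.
    assert (Hd : 1 - Rabs q <= Rabs (1 - q ^ S n)).
    { pose proof (Rabs_triang_inv 1 (q ^ S n)). rewrite Rabs_R1 in H. rewrite <- RPow_abs in H.
      assert (Rabs q ^ S n <= Rabs q). { rewrite <- tech_pow_Rmult. assert (Rabs q ^ n <= 1) by (apply pow_le_1; lra). nra. }
      lra. }
    assert (Hn1 : 1 - q ^ S n <> 0). { intro E. rewrite E, Rabs_R0 in Hd. lra. }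
    assert (E : a (S n) * x ^ S n / (a n * x ^ n) = c * q ^ n * x / (1 - q ^ S n)).
    { apply (Rmult_eq_reg_r (1 - q ^ S n)); auto. 
      replace (c * q ^ n * x / (1 - q ^ S n) * (1 - q ^ S n)) with (c * q ^ n * x) by (field; auto).
      replace (a (S n) * x ^ S n / (a n * x ^ n) * (1 - q ^ S n)) with ((a (S n) * (1 - q ^ S n)) * x / a n)
        by (simpl; field; split; auto; apply pow_nonzero; lra).
      rewrite Hrec. field. auto. }
    rewrite E. unfold Rdiv. rewrite !Rabs_mult, Rabs_Rinv by auto. rewrite <- RPow_abs, (Rabs_pos_eq x) by lra.
    assert (0 < 1 - Rabs q) by lra.
    assert (/ Rabs (1 - q ^ S n) <= / (1 - Rabs q)) by (apply Rinv_le_contravar; auto).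
    assert (0 <= Rabs c * Rabs q ^ n * x) by (apply Rmult_le_pos; [apply Rmult_le_pos; [apply Rabs_pos| apply pow_le; lra]| lra]).
    replace (Rabs c * x * / (1 - Rabs q) * Rabs q ^ n) with (Rabs c * Rabs q ^ n * x * / (1 - Rabs q)) by ring.
    apply Rmult_le_compat_l; auto.
  - apply is_lim_seq_const.
  - replace (Finite 0) with (Rbar_mult (Rabs c * x / (1 - Rabs q)) 0) by (simpl; f_equal; ring).
    apply is_lim_seq_scal_l. apply is_lim_seq_geom. rewrite Rabs_Rabsolu. lra.
Qed.


Lemma pow_lt_S x y n : 0 <= x < y -> x ^ S n < y ^ S n.
Proof.
  intros H. induction n. simpl. lra.
  rewrite <- (tech_pow_Rmult x (S n)), <- (tech_pow_Rmult y (S n)).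
  apply Rmult_le_0_lt_compat; try lra. apply pow_le; lra.
Qed.

Lemma Rdiv_pow x y n : y <> 0 -> (x / y) ^ n = x ^ n / y ^ n.
Proof. intros H. unfold Rdiv. rewrite Rpow_mult_distr, pow_inv. reflexivity. Qed.

Section Phi.
Variables (s t : R).
Hypothesis hs : s <> 0.
Hypothesis ht : t <> 0.
Hypothesis hD : 0 < s ^ 2 + 4 * t.

Lemma sqD : sqrt (s ^ 2 + 4 * t) * sqrt (s ^ 2 + 4 * t) = s ^ 2 + 4 * t.
Proof. apply sqrt_sqrt. lra. Qed.

Lemma ph_diff : phi s t - phi' s t = sqrt (s ^ 2 + 4 * t).
Proof. unfold phi, phi'. field. Qed.

Lemma ph_diff_pos : 0 < phi s t - phi' s t.
Proof. rewrite ph_diff. apply sqrt_lt_R0. auto. Qed.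

Lemma ph_sum : phi s t + phi' s t = s.
Proof. unfold phi, phi'. field. Qed.

Lemma ph_prod : phi s t * phi' s t = - t.
Proof. unfold phi, phi'. pose proof sqD. nra. Qed.

Lemma ph_nz : phi s t <> 0.
Proof. intro E. pose proof ph_prod. rewrite E in H. lra. Qed.
Lemma ph'_nz : phi' s t <> 0.
Proof. intro E. pose proof ph_prod. rewrite E in H. lra. Qed.

Lemma binet n : fibst s t n * (phi s t - phi' s t) = phi s t ^ n - phi' s t ^ n.
Proof.
  pose proof ph_sum. pose proof ph_prod.
  assert (H2 : forall n, fibst s t n * (phi s t - phi' s t) = phi s t ^ n - phi' s t ^ n /\
                 fibst s t (S n) * (phi s t - phi' s t) = phi s t ^ S n - phi' s t ^ S n).
  { induction n0. simpl. split; ring.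
    destruct IHn0 as [IH1 IH2]. split; auto.
    change (fibst s t (S (S n0))) with (s * fibst s t (S n0) + t * fibst s t n0).
    replace ((s * fibst s t (S n0) + t * fibst s t n0) * (phi s t - phi' s t))
      with (s * (fibst s t (S n0) * (phi s t - phi' s t)) + t * (fibst s t n0 * (phi s t - phi' s t))) by ring.
    rewrite IH1, IH2. set (X := phi s t) in *. set (Y := phi' s t) in *.
    assert (E1 : X ^ 2 = s * X + t) by (rewrite <- H; replace t with (- (X * Y)) by lra; ring).
    assert (E2 : Y ^ 2 = s * Y + t) by (rewrite <- H; replace t with (- (X * Y)) by lra; ring).
    replace (X ^ S (S n0)) with (X ^ n0 * X ^ 2) by (simpl; ring).
    replace (Y ^ S (S n0)) with (Y ^ n0 * Y ^ 2) by (simpl; ring). rewrite E1, E2. simpl. ring. }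
  apply H2.
Qed.

Lemma abs_neq : Rabs (phi s t) <> Rabs (phi' s t).
Proof.
  intro E. pose proof ph_diff_pos. pose proof ph_sum.
  destruct (Rcase_abs (phi s t)), (Rcase_abs (phi' s t));
  [rewrite (Rabs_left (phi s t)), (Rabs_left (phi' s t)) in E by lra
  |rewrite (Rabs_left (phi s t)), (Rabs_right (phi' s t)) in E by lra
  |rewrite (Rabs_right (phi s t)), (Rabs_left (phi' s t)) in E by lra
  |rewrite (Rabs_right (phi s t)), (Rabs_right (phi' s t)) in E by lra]; lra.
Qed.

Lemma pow_neq n : phi s t ^ S n <> phi' s t ^ S n.
Proof.
  intro E. assert (E2 : Rabs (phi s t) ^ S n = Rabs (phi' s t) ^ S n) by (rewrite !RPow_abs, E; reflexivity).
  pose proof abs_neq. pose proof (Rabs_pos (phi s t)). pose proof (Rabs_pos (phi' s t)).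
  destruct (Rlt_or_le (Rabs (phi s t)) (Rabs (phi' s t))).
  - pose proof (pow_lt_S (Rabs (phi s t)) (Rabs (phi' s t)) n ltac:(lra)). lra.
  - assert (Rabs (phi' s t) < Rabs (phi s t)) by lra.
    pose proof (pow_lt_S (Rabs (phi' s t)) (Rabs (phi s t)) n ltac:(lra)). lra.
Qed.

Lemma fib_nz n : fibst s t (S n) <> 0.
Proof. intro E. pose proof (binet (S n)). rewrite E in H. pose proof (pow_neq n). lra. Qed.

Lemma fibo_nz n : fibotorial s t n <> 0.
Proof. induction n. simpl. lra. simpl. apply Rmult_integral_contrapositive. split; auto. apply fib_nz. Qed.

Lemma Exp_coef_0 : Exp_coef s t 0 = 1.
Proof. unfold Exp_coef. simpl. field. Qed.

Lemma Exp_rec n : Exp_coef s t (S n) * fibst s t (S n) = phi s t ^ n * Exp_coef s t n.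
Proof.
  unfold Exp_coef.
  assert (Ee : (S n * (S n - 1) / 2 = n * (n - 1) / 2 + n)%nat).
  { replace (S n - 1)%nat with n by lia. rewrite <- Nat.div_add by lia.
    f_equal. destruct n; simpl; lia. }
  rewrite Ee, pow_add. change (fibotorial s t (S n)) with (fibotorial s t n * fibst s t (S n)). pose proof (fibo_nz n). pose proof (fib_nz n). field. auto.
Qed.

Lemma Exp_rec2 n : Exp_coef s t (S n) * (phi s t ^ S n - phi' s t ^ S n) = (phi s t - phi' s t) * phi s t ^ n * Exp_coef s t n.
Proof. rewrite <- binet. rewrite <- Rmult_assoc, Exp_rec. ring. Qed.

Definition q1 := phi' s t / phi s t.
Definition q2 := phi s t / phi' s t.

Lemma good1 : Rabs q1 < 1 -> GoodSeq (Exp_coef s t) q1 (1 - q1) 1.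
Proof.
  intros Hq. split. apply Exp_coef_0. split. 2: split; auto; rewrite Rabs_R1; lra.
  intros n. pose proof ph_nz. pose proof (Exp_rec2 n). unfold q1. rewrite Rdiv_pow by auto. rewrite pow1.
  apply (Rmult_eq_reg_r (phi s t ^ S n)). 2: apply pow_nonzero; auto.
  replace (Exp_coef s t (S n) * (1 - phi' s t ^ S n / phi s t ^ S n) * phi s t ^ S n)
    with (Exp_coef s t (S n) * (phi s t ^ S n - phi' s t ^ S n)) by (field; apply pow_nonzero; auto).
  rewrite H0. simpl. field. auto.
Qed.

Lemma good2 : 1 < Rabs q1 -> GoodSeq (Exp_coef s t) q2 (1 - q2) q2.
Proof.
  intros Hq. pose proof ph_nz. pose proof ph'_nz.
  assert (Hq2 : Rabs q2 < 1).
  { unfold q1, q2 in *. rewrite Rabs_div in * by auto. 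
    pose proof (Rabs_pos (phi s t)). assert (0 < Rabs (phi s t)) by (apply Rabs_pos_lt; auto).
    assert (0 < Rabs (phi' s t)) by (apply Rabs_pos_lt; auto).
    apply (Rmult_lt_reg_r (Rabs (phi' s t))); auto. unfold Rdiv. rewrite Rmult_assoc, Rinv_l by lra.
    apply (Rmult_lt_compat_r (Rabs (phi s t))) in Hq; auto. unfold Rdiv in Hq.
    rewrite Rmult_assoc, Rinv_l in Hq by lra. lra. }
  split. apply Exp_coef_0. split. 2: split; auto; lra.
  intros n. pose proof (Exp_rec2 n). unfold q2. rewrite !Rdiv_pow by auto.
  apply (Rmult_eq_reg_r (phi' s t ^ S n)). 2: apply pow_nonzero; auto.
  replace (Exp_coef s t (S n) * (1 - phi s t ^ S n / phi' s t ^ S n) * phi' s t ^ S n)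
    with (- (Exp_coef s t (S n) * (phi s t ^ S n - phi' s t ^ S n))) by (field; apply pow_nonzero; auto).
  rewrite H1. simpl. field. split; auto. apply pow_nonzero; auto.
Qed.

End Phi.


Lemma Cprod_ext (f g : nat -> C) N : (forall k, f k = g k) -> Cprod f N = Cprod g N.
Proof. intros H. induction N; simpl; auto. rewrite IHN, H. reflexivity. Qed.

Lemma holo_ext_ball (f g : C -> C) x rad : 0 < rad -> (forall y, Cmod (y - x) < rad -> f y = g y) ->
  C_holo_at f x -> C_holo_at g x.
Proof.
  intros Hr H Hf. apply (@ex_derive_ext_loc C_AbsRing C_NormedModule f g x); auto.
  eapply filter_imp; [| apply (@locally_ball_norm C_AbsRing (AbsRing_NormedModule C_AbsRing) x (mkposreal rad Hr))].
  intros y Hy. apply H. exact Hy.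
Qed.

Lemma holo_F1 c q k x : (1 - RtoC c * (RtoC (q ^ k) * x))%C <> 0%C -> C_holo_at (fun z => F1 c q z k) x.
Proof.
  intros H. assert (E : (fun z => F1 c q z k) = (fun z => / (1 - (RtoC c * RtoC (q ^ k)) * z))%C).
  { apply functional_extensionality. intros z. unfold F1. f_equal. ring. }
  rewrite E. apply holo_inv_lin. replace (RtoC c * RtoC (q ^ k) * x)%C with (RtoC c * (RtoC (q ^ k) * x))%C by ring. auto.
Qed.

Lemma FE1' a q c : GoodSeq a q c 1 -> forall v, absconv a v ->
  Ssum a (RtoC q * v)%C = (Ssum a v * (1 - RtoC c * v))%C.
Proof.
  intros HG v Hv. pose proof HG as [_ [_ [Hq _]]].
  assert (Hqw : absconv a (RtoC q * v)%C). { replace (RtoC q * v)%C with (RtoC (q ^ 1) * v)%C by (f_equal; f_equal; ring). apply absconv_pow; auto; lra. }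
  assert (Hrw : absconv a (RtoC 1 * v)%C). { replace (RtoC 1 * v)%C with v by ring. auto. }
  pose proof (FE a q c 1 HG v Hv Hqw Hrw) as Hfe. replace (RtoC 1 * v)%C with v in Hfe by ring.
  replace (Ssum a (RtoC q * v)) with (Ssum a v - (Ssum a v - Ssum a (RtoC q * v)))%C by ring. rewrite Hfe. ring.
Qed.

Lemma notpole1 a q c : GoodSeq a q c 1 -> forall z, absconv a z -> forall k,
  (1 - RtoC c * (RtoC (q ^ k) * z))%C <> 0%C.
Proof.
  intros HG z Hz k E. pose proof HG as [_ [_ [Hq _]]].
  set (Y := fun N => Ssum a (RtoC (q ^ N) * z)%C).
  assert (HY : forall N, Y (S N) = (Y N * (1 - RtoC c * (RtoC (q ^ N) * z)))%C).
  { intros N. unfold Y. rewrite <- (FE1' a q c HG); auto. f_equal. simpl. rewrite RtoC_mult. ring.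
    apply absconv_pow; auto; lra. }
  assert (HZ : forall j, Y (S k + j)%nat = RtoC 0).
  { induction j. rewrite Nat.add_0_r, HY, E. ring. rewrite Nat.add_succ_r, HY, IHj. ring. }
  pose proof (S_seq1 a q c 1 HG z) as L. rewrite lim_C_eps in L. destruct (L (/ 2)) as [N HN]. lra.
  specialize (HN (S k + N)%nat ltac:(lia)). change (Cmod (Y (S k + N)%nat - RtoC 1) < / 2) in HN. rewrite HZ in HN.
  replace (RtoC 0 - RtoC 1)%C with (- RtoC 1)%C in HN by ring. rewrite Cmod_opp, Cmod_1 in HN. lra.
Qed.

Lemma Cprod_ext_lt (f g : nat -> C) N : (forall k, (k < N)%nat -> f k = g k) -> Cprod f N = Cprod g N.
Proof. induction N; intros H; simpl; auto. f_equal. apply IHN. intros; apply H; lia. apply H; lia. Qed.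

Lemma Cprod_replace (f : nat -> C) (k0 : nat) (v u : C) N : (k0 < N)%nat -> (u * f k0)%C = v ->
  Cprod (fun k => if Nat.eqb k k0 then v else f k) N = (u * Cprod f N)%C.
Proof.
  intros HN Hv. induction N. lia.
  simpl. destruct (Nat.eqb N k0) eqn:Ek.
  - apply Nat.eqb_eq in Ek. subst N.
    rewrite (Cprod_ext_lt _ f). rewrite <- Hv. ring.
    intros k Hk. destruct (Nat.eqb k k0) eqn:E2; auto. apply Nat.eqb_eq in E2. lia.
  - rewrite IHN. ring. apply Nat.eqb_neq in Ek. lia.
Qed.


Lemma RtoC_nz x : x <> 0 -> RtoC x <> 0%C.
Proof. intros H E. apply H. apply (f_equal fst) in E. simpl in E. exact E. Qed.

Lemma cancel_l (A X : C) : A <> 0%C -> (A * X)%C = 0%C -> X = 0%C.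
Proof. intros HA E. replace X with (/ A * (A * X))%C by (field; auto). rewrite E. ring. Qed.

Section Phi2.
Variables (s t : R).
Hypothesis hs : s <> 0.
Hypothesis ht : t <> 0.
Hypothesis hD : 0 < s ^ 2 + 4 * t.

Lemma factor_rel k : (phi s t - phi' s t) * phi' s t ^ k = phi s t ^ S k * ((1 - q1 s t) * q1 s t ^ k).
Proof. pose proof (ph_nz s t ht hD). unfold q1. rewrite Rdiv_pow by auto. simpl. field. split; auto. apply pow_nonzero; auto. Qed.

Lemma denom1_eq z k : denom1 s t z k = (RtoC (phi s t ^ S k) * (1 - RtoC (1 - q1 s t) * (RtoC (q1 s t ^ k) * z)))%C.
Proof. unfold denom1. rewrite factor_rel, !RtoC_mult. ring. Qed.

Lemma factor1_eq z k : factor1 s t z k = F1 (1 - q1 s t) (q1 s t) z k.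
Proof.
  unfold factor1, F1, Cdiv. rewrite denom1_eq.
  set (X := (1 - RtoC (1 - q1 s t) * (RtoC (q1 s t ^ k) * z))%C).
  assert (HA : RtoC (phi s t ^ S k) <> 0%C) by (apply RtoC_nz, pow_nonzero, ph_nz; auto).
  destruct (classic (X = 0%C)) as [E|E].
  - rewrite E, Cmult_0_r, Cinv0. ring.
  - field. auto.
Qed.

Lemma factor2_eq z k : factor2 s t z k = F2 (1 - q2 s t) (q2 s t) z k.
Proof.
  pose proof (ph'_nz s t ht hD). unfold factor2, F2.
  assert (E : - ((phi s t - phi' s t) * (phi s t ^ k / phi' s t ^ S k)) = (1 - q2 s t) * q2 s t ^ k).
  { unfold q2. rewrite Rdiv_pow by auto. simpl. field. split; auto. apply pow_nonzero; auto. }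
  replace ((phi s t - phi' s t) * (phi s t ^ k / phi' s t ^ S k)) with (- ((1 - q2 s t) * q2 s t ^ k)) by lra.
  rewrite RtoC_opp, !RtoC_mult. ring.
Qed.

Lemma pole_char z : poles1 s t z <-> exists k, (1 - RtoC (1 - q1 s t) * (RtoC (q1 s t ^ k) * z))%C = 0%C.
Proof.
  assert (HA : forall k, RtoC (phi s t ^ S k) <> 0%C) by (intros; apply RtoC_nz, pow_nonzero, ph_nz; auto).
  unfold poles1. split; intros [k Hk]; exists k; rewrite denom1_eq in *.
  - apply cancel_l in Hk; auto.
  - rewrite Hk. ring.
Qed.

Lemma in_disk_absconv z : in_disk_of_conv (Exp_coef s t) z -> absconv (Exp_coef s t) z.
Proof.
  intros [r [Hr [M HM]]]. pose proof (Cmod_ge_0 z). assert (Hr0 : 0 < r) by lra.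
  assert (HM0 : 0 <= M) by (pose proof (HM 0%nat); simpl in H0; pose proof (Rabs_pos (Exp_coef s t 0)); lra).
  apply (@ex_series_le R_AbsRing R_CompleteNormedModule _ (fun n => M * (Cmod z / r) ^ n)).
  - intros n. change (Rabs (Rabs (Exp_coef s t n) * Cmod z ^ n) <= M * (Cmod z / r) ^ n).
    rewrite Rabs_pos_eq by (apply Rmult_le_pos; [apply Rabs_pos| apply pow_le; auto]).
    rewrite Rdiv_pow by lra. specialize (HM n).
    assert (0 < r ^ n) by (apply pow_lt; auto).
    apply (Rmult_le_reg_r (r ^ n)); auto. unfold Rdiv.
    replace (M * (Cmod z ^ n * / r ^ n) * r ^ n) with (M * Cmod z ^ n) by (field; lra).
    replace (Rabs (Exp_coef s t n) * Cmod z ^ n * r ^ n) with (Rabs (Exp_coef s t n) * r ^ n * Cmod z ^ n) by ring.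
    apply Rmult_le_compat_r; auto. apply pow_le; auto.
  - apply (@ex_series_scal_l R_AbsRing R_NormedModule). apply ex_series_geom.
    rewrite Rabs_pos_eq. apply (Rmult_lt_reg_r r); auto. unfold Rdiv. rewrite Rmult_assoc, Rinv_l; lra.
    apply Rdiv_le_0_compat; auto.
Qed.

End Phi2.


Lemma part2 (s t : R) (hs : s <> 0) (ht : t <> 0) (hD : 0 < s ^ 2 + 4 * t) :
  1 < Rabs (q1 s t) -> forall z : C, exists L : C,
       is_series (Exp_term s t z) L /\ is_inf_prod (factor2 s t z) L.
Proof.
  intros Hq z. pose proof (good2 s t hs ht hD Hq) as HG.
  set (a := Exp_coef s t) in *. set (p := q2 s t) in *.
  pose proof (ph_nz s t ht hD). pose proof (ph'_nz s t ht hD). pose proof (ph_diff_pos s t hD).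
  assert (Hp0 : p <> 0) by (unfold p, q2; unfold Rdiv; apply Rmult_integral_contrapositive; split; [auto| apply Rinv_neq_0_compat; auto]).
  assert (Hc : 1 - p <> 0).
  { unfold p, q2. intro E. assert (phi s t = phi' s t). { apply (Rmult_eq_reg_r (/ phi' s t)). 2: apply Rinv_neq_0_compat; auto.
      rewrite Rinv_r by auto. unfold Rdiv in E. lra. } lra. }
  pose proof (absconv_all a p (1 - p) HG Hc Hp0 z) as Hz.
  exists (Ssum a z). split. apply Ssum_spec; auto.
  unfold is_inf_prod. eapply filterlim_ext.
  { intros N. apply Cprod_ext. intros k. symmetry. apply factor2_eq; auto. }
  apply (elem_lim _ (fun N => Ssum a (RtoC (p ^ N) * z)%C)).
  - intros N. symmetry. apply (IT2 a p (1 - p) HG); auto.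
  - apply (S_seq1 a p (1 - p) p HG).
Qed.

Lemma one_minus_zero (X : C) : (RtoC 1 - X)%C = 0%C -> X = RtoC 1.
Proof. intros E. replace X with (RtoC 1 - (RtoC 1 - X))%C by ring. rewrite E. ring. Qed.

Lemma part1 (s t : R) (hs : s <> 0) (ht : t <> 0) (hD : 0 < s ^ 2 + 4 * t) :
  Rabs (q1 s t) < 1 ->
     exists P : C -> C,
       (forall z, ~ poles1 s t z -> is_inf_prod (factor1 s t z) (P z)) /\
       meromorphic_on_C P (poles1 s t) /\
       (forall z, in_disk_of_conv (Exp_coef s t) z ->
          ~ poles1 s t z /\ is_series (Exp_term s t z) (P z)).
Proof.
  intros Hq. pose proof (good1 s t hs ht hD Hq) as HG.
  pose proof (ph_nz s t ht hD). pose proof (ph'_nz s t ht hD).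
  assert (Hq0 : q1 s t <> 0) by (unfold q1; unfold Rdiv; apply Rmult_integral_contrapositive; split; [auto| apply Rinv_neq_0_compat; auto]).
  set (a := Exp_coef s t) in *. set (q := q1 s t) in *. set (c := 1 - q) in *.
  pose proof (R0_pos a q c 1 HG) as HR. set (R := R0 q c) in *.
  set (dn := fun k z => (1 - RtoC c * (RtoC (q ^ k) * z))%C).
  set (Pdef := fun z => epsilon (inhabits (RtoC 0)) (fun L => is_inf_prod (factor1 s t z) L)).
  assert (FactLim : forall z N0, Cmod (RtoC (q ^ N0) * z)%C <= 2 * R ->
     is_inf_prod (factor1 s t z) (Cprod (F1 c q z) N0 * Ssum a (RtoC (q ^ N0) * z))%C).
  { intros z N0 HN. unfold is_inf_prod. eapply filterlim_ext.
    { intros N. apply Cprod_ext. intros k. symmetry. apply factor1_eq; auto. }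
    apply (lim1 a q c HG); auto. }
  assert (FactA : forall z N0, Cmod (RtoC (q ^ N0) * z)%C <= 2 * R ->
     Pdef z = (Cprod (F1 c q z) N0 * Ssum a (RtoC (q ^ N0) * z))%C).
  { intros z N0 HN. pose proof (FactLim z N0 HN) as HL.
    assert (HP : is_inf_prod (factor1 s t z) (Pdef z)) by (unfold Pdef; apply epsilon_spec; eexists; exact HL).
    exact (filterlim_locally_unique _ _ _ HP HL). }
  assert (Hex : forall z, exists N0, Cmod (RtoC (q ^ N0) * z)%C <= R / 2).
  { intros z. apply existsN; auto. lra. }
  assert (Hex2 : forall z, exists N0, Cmod (RtoC (q ^ N0) * z)%C <= 2 * R).
  { intros z. destruct (Hex z) as [N HN]. exists N. lra. }
  assert (Hqpow : forall N y, Cmod (RtoC (q ^ N) * y)%C = Rabs q ^ N * Cmod y).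
  { intros. rewrite Cmod_mult, Cmod_R, RPow_abs. reflexivity. }
  exists Pdef. split; [| split].
  -
    intros z _. destruct (Hex2 z) as [N0 HN0]. rewrite (FactA z N0 HN0). apply FactLim; auto.
  - split.
    +
      intros z0 Hnp.
      destruct (Hex (RtoC (Cmod z0 + 1))) as [N0 HN0].
      rewrite Hqpow, Cmod_R, (Rabs_pos_eq (Cmod z0 + 1)) in HN0 by (pose proof (Cmod_ge_0 z0); lra).
      assert (Hball : forall y, Cmod (y - z0) < 1 -> Cmod (RtoC (q ^ N0) * y)%C <= R / 2).
      { intros y Hy. rewrite Hqpow. pose proof (Cmod_triangle z0 (y - z0)). replace (z0 + (y - z0))%C with y in H1 by ring.
        pose proof (Rabs_pos q). assert (0 <= Rabs q ^ N0) by (apply pow_le; auto).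
        apply Rle_trans with (Rabs q ^ N0 * (Cmod z0 + 1)); auto. apply Rmult_le_compat_l; auto. lra. }
      apply (holo_ext_ball (fun z => Cprod (F1 c q z) N0 * Ssum a (RtoC (q ^ N0) * z))%C Pdef z0 1). lra.
      { intros y Hy. symmetry. apply FactA. pose proof (Hball y Hy). lra. }
      apply holo_mult.
      * apply holo_Cprod. intros k _. apply holo_F1. intro E. apply Hnp. apply pole_char; auto. exists k. exact E.
      * apply holo_comp_lin. apply (holo_S a q c 1 HG).
        pose proof (Hball z0 ltac:(replace (z0 - z0)%C with (RtoC 0) by ring; rewrite Cmod_0; lra)). change (R0 q c) with R. lra.
    +
      intros w Hw. apply pole_char in Hw; auto. destruct Hw as [k0 Hk0].
      set (beta := c * q ^ k0).
      assert (Hbw : (RtoC beta * w)%C = RtoC 1).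
      { unfold beta. rewrite RtoC_mult. apply one_minus_zero in Hk0. rewrite <- Hk0. unfold c, q. ring. }
      set (Q := Rabs q). assert (HQ : 0 < Q < 1) by (split; [apply Rabs_pos_lt; auto | auto]).
      assert (Hmodw : Rabs c * Q ^ k0 * Cmod w = 1).
      { apply (f_equal Cmod) in Hbw. rewrite Cmod_mult, Cmod_R, Cmod_1 in Hbw. unfold beta in Hbw.
        rewrite Rabs_mult, <- RPow_abs in Hbw. exact Hbw. }
      assert (Hc0 : 0 < Rabs c). { destruct (Rle_lt_or_eq_dec 0 (Rabs c) (Rabs_pos c)) as [h|h]; auto.
        rewrite <- h in Hmodw. lra. }
      assert (Hw0 : 0 < Cmod w). { destruct (Rle_lt_or_eq_dec 0 (Cmod w) (Cmod_ge_0 w)) as [h|h]; auto.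
        rewrite <- h in Hmodw. lra. }
      assert (Hbeta : beta <> 0). { intro E. rewrite E, Cmult_0_l in Hbw. apply RtoC_inj in Hbw. 
        lra. }
      set (rad := Cmod w * (1 - Q)).
      assert (Hrad : 0 < rad) by (unfold rad; apply Rmult_lt_0_compat; lra).
      assert (Sep : forall z k, dn k z = 0%C -> k <> k0 -> rad <= Cmod (z - w)).
      { intros z k Hk Hne. unfold dn in Hk.
        assert (Hmz : Rabs c * Q ^ k * Cmod z = 1).
        { assert (E1 : (RtoC c * (RtoC (q ^ k) * z))%C = RtoC 1).
          { apply one_minus_zero in Hk. exact Hk. }
          apply (f_equal Cmod) in E1. rewrite !Cmod_mult, !Cmod_R, Rabs_R1, <- RPow_abs in E1. fold Q in E1. lra. }
        pose proof (Cmod_rev z w) as [Hr1 Hr2]. pose proof (Cmod_ge_0 z).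
        destruct (Nat.lt_ge_cases k k0) as [Hlt | Hge].
        - replace k0 with (k + S (k0 - k - 1))%nat in Hmodw by lia. rewrite pow_add in Hmodw.
          set (d := S (k0 - k - 1)) in *.
          assert (Hd : Q ^ d <= Q). { unfold d. rewrite <- tech_pow_Rmult. assert (Q ^ (k0 - k - 1) <= 1) by (apply pow_le_1; lra). nra. }
          assert (0 < Rabs c * Q ^ k) by (apply Rmult_lt_0_compat; auto; apply pow_lt; lra).
          assert (Ez : Cmod z = Q ^ d * Cmod w).
          { apply (Rmult_eq_reg_l (Rabs c * Q ^ k)). lra. lra. }
          unfold rad. rewrite Ez in Hr2. nra.
        - assert (Hgt : (k0 < k)%nat) by lia.
          replace k with (k0 + S (k - k0 - 1))%nat in Hmz by lia. rewrite pow_add in Hmz.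
          set (d := S (k - k0 - 1)) in *.
          assert (Hd : Q ^ d <= Q). { unfold d. rewrite <- tech_pow_Rmult. assert (Q ^ (k - k0 - 1) <= 1) by (apply pow_le_1; lra). nra. }
          assert (Hd0 : 0 <= Q ^ d) by (apply pow_le; lra).
          assert (0 < Rabs c * Q ^ k0) by (apply Rmult_lt_0_compat; auto; apply pow_lt; lra).
          assert (Ew : Cmod w = Q ^ d * Cmod z).
          { apply (Rmult_eq_reg_l (Rabs c * Q ^ k0)). lra. lra. }
          unfold rad. rewrite Ew in *.
          assert (Q * (2 - Q) <= 1) by nra.
          assert (Q ^ d * (2 - Q) <= 1) by nra.
          nra. }
      exists rad. split; auto. split.
      { intros z [Hz1 Hz2] Hp. apply pole_char in Hp; auto. destruct Hp as [k Hk].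
        destruct (Nat.eq_dec k k0) as [->|Hne].
        - assert (Ez : (RtoC beta * z)%C = RtoC 1).
          { unfold beta. rewrite RtoC_mult. apply one_minus_zero in Hk. rewrite <- Hk. unfold c, q. ring. }
          assert (z = w).
          { assert (E3 : (RtoC beta * (z - w))%C = 0%C)
              by (replace (RtoC beta * (z - w))%C with (RtoC beta * z - RtoC beta * w)%C by ring; rewrite Ez, Hbw; ring).
            apply cancel_l in E3. replace z with ((z - w) + w)%C by ring. rewrite E3. ring. apply RtoC_nz; auto. }
          subst z. replace (w - w)%C with (RtoC 0) in Hz1 by ring. rewrite Cmod_0 in Hz1. lra.
        - pose proof (Sep z k Hk Hne). lra. }
      destruct (Hex (RtoC (Cmod w + rad))) as [N1 HN1].
      rewrite Hqpow, Cmod_R, (Rabs_pos_eq (Cmod w + rad)) in HN1 by lra.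
      set (N0 := (N1 + S k0)%nat).
      assert (HQN : Rabs q ^ N0 <= Rabs q ^ N1).
      { unfold N0. rewrite pow_add. fold Q. assert (Q ^ S k0 <= 1) by (apply pow_le_1; lra).
        assert (0 <= Q ^ N1) by (apply pow_le; lra). nra. }
      assert (Hball : forall y, Cmod (y - w) < rad -> Cmod (RtoC (q ^ N0) * y)%C <= R / 2).
      { intros y Hy. rewrite Hqpow. pose proof (Cmod_triangle w (y - w)). replace (w + (y - w))%C with y in H1 by ring.
        pose proof (Rabs_pos q). assert (0 <= Rabs q ^ N0) by (apply pow_le; auto).
        apply Rle_trans with (Rabs q ^ N1 * (Cmod w + rad)); auto.
        apply Rle_trans with (Rabs q ^ N0 * (Cmod w + rad)). apply Rmult_le_compat_l; auto. lra.
        apply Rmult_le_compat_r; auto. lra. }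
      set (Hf := fun z k => if Nat.eqb k k0 then RtoC (- / beta) else F1 c q z k).
      exists 1%nat, (fun z => Cprod (Hf z) N0 * Ssum a (RtoC (q ^ N0) * z))%C. split.
      * intros z Hz. apply holo_mult.
        -- apply holo_Cprod. intros k _. unfold Hf. destruct (Nat.eqb k k0) eqn:Ek.
           ++ apply holo_const.
           ++ apply holo_F1. intro E. apply Nat.eqb_neq in Ek. pose proof (Sep z k E Ek). lra.
        -- apply holo_comp_lin. apply (holo_S a q c 1 HG). pose proof (Hball z Hz). change (R0 q c) with R. lra.
      * intros z [Hz1 Hz2]. cbv beta. rewrite (FactA z N0) by (pose proof (Hball z Hz2); lra).
        unfold Hf. rewrite (Cprod_replace (F1 c q z) k0 (RtoC (- / beta)) (z - w)%C N0).
        -- simpl. ring.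
        -- unfold N0; lia.
        -- assert (Hzw : (w - z)%C <> 0%C). { intro E. rewrite <- Cmod_opp in Hz1. replace (- (z - w))%C with (w - z)%C in Hz1 by ring.
             rewrite E, Cmod_0 in Hz1. lra. }
           unfold F1. replace (1 - RtoC c * (RtoC (q ^ k0) * z))%C with (RtoC beta * (w - z))%C.
           2:{ replace (RtoC beta * (w - z))%C with (RtoC beta * w - RtoC beta * z)%C by ring. rewrite Hbw.
               unfold beta. rewrite RtoC_mult. ring. }
           rewrite RtoC_opp, RtoC_inv by auto. field. split; auto. apply RtoC_nz; auto.
  -
    intros z Hz. apply in_disk_absconv in Hz; auto. fold a in Hz.
    pose proof (notpole1 a q c HG z Hz) as Hnp. split.
    + intro Hp. apply pole_char in Hp; auto. destruct Hp as [k Hk]. exact (Hnp k Hk).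
    + destruct (Hex2 z) as [N0 HN0]. rewrite (FactA z N0 HN0).
      rewrite <- (IT1 a q c HG z Hz N0). apply Ssum_spec; auto.
      intros k _. apply Hnp.
Qed.


Theorem mainTheorem9 (s t : R) (hs : s <> 0) (ht : t <> 0) (hD : 0 < s ^ 2 + 4 * t) :
  let q := phi' s t / phi s t in
  (Rabs q < 1 ->
     exists P : C -> C,
       (forall z, ~ poles1 s t z -> is_inf_prod (factor1 s t z) (P z)) /\
       meromorphic_on_C P (poles1 s t) /\
       (forall z, in_disk_of_conv (Exp_coef s t) z ->
          ~ poles1 s t z /\ is_series (Exp_term s t z) (P z))) /\
  (1 < Rabs q ->
     forall z : C, exists L : C,
       is_series (Exp_term s t z) L /\ is_inf_prod (factor2 s t z) L).
Proof.
  intros q. split.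
  - intros Hq. exact (part1 s t hs ht hD Hq).
  - intros Hq. exact (part2 s t hs ht hD Hq).
Qed.
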